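(* Let $K=\{k_0,k_1,\dots,k_n\}$ be a finite set of alternatives, $K_*=K\setminus\{k_0\}$, $T_1,T_2$ finite type sets with $\min\{|T_1|,|T_2|\}=2$, $T=T_1\times T_2$, and $\lambda$ a probability measure on $T$ with $\lambda(t)>0$ for all $t$, equal to the product of its marginals $\lambda_1,\lambda_2$. If an interim allocation rule $Q=(Q_1,Q_2)$, $Q_i:K\times T_i\to\mathbb{R}$, is implementable, then for all $G\subseteq K_*$, $E_1\subseteq T_1$ and $E_2\subseteq T_2$, $$\sum_{k\in G}\Big[\sum_{t_1\in E_1}Q_1^k(t_1)\lambda_1(t_1)-\sum_{t_2\in E_2}Q_2^k(t_2)\lambda_2(t_2)\Big]\le \lambda\big(E_1\times (T_2\setminus E_2)\big).$$
   Context: An ex post allocation rule $q:K\times T\to\mathbb{R}$ is feasible if $q\ge 0$ and $\sum_{k\in K}q^k(t)=1$ for all $t\in T$. An interim allocation rule $Q$ is implementable if there exists a feasible $q$ with $Q_i^k(t_i)=\sum_{t_{-i}\in T_{-i}}q^k(t)\lambda_{-i}(t_{-i})$ for all $i\in\{1,2\}$, $t_i\in T_i$, $k\in K$, where $-i$ denotes the other player. For $E\subseteq T$, $\lambda(E)=\sum_{t\in E}\lambda(t)$. *)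

(* Defs.v *)
From HB Require Import structures.
From mathcomp Require Import all_boot all_order all_algebra.
Set Implicit Arguments. Unset Strict Implicit. Unset Printing Implicit Defensive.
Import Order.TTheory GRing.Theory Num.Theory.
Local Open Scope ring_scope.

Definition marg1 (R : numDomainType) (T1 T2 : finType) (lam : T1 * T2 -> R)
  (t1 : T1) : R := \sum_(t2 : T2) lam (t1, t2).
Definition marg2 (R : numDomainType) (T1 T2 : finType) (lam : T1 * T2 -> R)
  (t2 : T2) : R := \sum_(t1 : T1) lam (t1, t2).

Definition measT (R : numDomainType) (T1 T2 : finType) (lam : T1 * T2 -> R)
  (E : {set T1 * T2}) : R := \sum_(t in E) lam t.

Definition feasible (R : numDomainType) (K T1 T2 : finType)
  (q : K -> T1 * T2 -> R) : Prop :=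
  (forall k t, 0 <= q k t) /\ (forall t, \sum_(k : K) q k t = 1).

Definition implementable (R : numDomainType) (K T1 T2 : finType)
  (lam : T1 * T2 -> R) (Q1 : K -> T1 -> R) (Q2 : K -> T2 -> R) : Prop :=
  exists q : K -> T1 * T2 -> R, feasible q /\
    (forall k t1, Q1 k t1 = \sum_(t2 : T2) q k (t1, t2) * marg2 lam t2) /\
    (forall k t2, Q2 k t2 = \sum_(t1 : T1) q k (t1, t2) * marg1 lam t1).

(* Main.v *)
Require Import Defs.
From HB Require Import structures.
From mathcomp Require Import all_boot all_order all_algebra.
From mathcomp Require Import ring lra.
Import Order.TTheory GRing.Theory Num.Theory.
Local Open Scope ring_scope.

Theorem lemma2 (R : realFieldType) (K T1 T2 : finType) (k0 : K)
  (lam : T1 * T2 -> R)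
  (hT : minn #|T1| #|T2| = 2%N)
  (hpos : forall t, 0 < lam t)
  (hprob : \sum_(t : T1 * T2) lam t = 1)
  (hprod : forall t1 t2, lam (t1, t2) = marg1 lam t1 * marg2 lam t2)
  (Q1 : K -> T1 -> R) (Q2 : K -> T2 -> R)
  (hQ : implementable lam Q1 Q2) :
  forall (G : {set K}) (E1 : {set T1}) (E2 : {set T2}),
    G \subset [set~ k0] ->
    \sum_(k in G)
       (\sum_(t1 in E1) Q1 k t1 * marg1 lam t1
        - \sum_(t2 in E2) Q2 k t2 * marg2 lam t2)
    <= measT lam (setX E1 (~: E2)).
Proof.
move=> G E1 E2 _.
case: hQ => q [[q0 q1] [h1 h2]].
have e1 : forall k, \sum_(t1 in E1) Q1 k t1 * marg1 lam t1 =
   \sum_t1 \sum_t2 ((t1 \in E1)%:R * q k (t1,t2) * lam (t1,t2)).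
  move=> k; rewrite big_mkcond; apply: eq_bigr => t1 _.
  case: (t1 \in E1) => /=.
    rewrite h1 mulr_suml; apply: eq_bigr => t2 _; rewrite hprod; ring.
  by rewrite big1 // => t2 _; rewrite !mul0r.
have e2 : forall k, \sum_(t2 in E2) Q2 k t2 * marg2 lam t2 =
   \sum_t1 \sum_t2 ((t2 \in E2)%:R * q k (t1,t2) * lam (t1,t2)).
  move=> k; rewrite exchange_big big_mkcond; apply: eq_bigr => t2 _.
  case: (t2 \in E2) => /=.
    rewrite h2 mulr_suml; apply: eq_bigr => t1 _; rewrite hprod; ring.
  by rewrite big1 // => t1 _; rewrite !mul0r.
rewrite (eq_bigr (fun k => \sum_t1 \sum_t2 (((t1 \in E1)%:R - (t2 \in E2)%:R)
     * q k (t1,t2) * lam (t1,t2)))); last first.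
  move=> k _; rewrite e1 e2 -sumrB; apply: eq_bigr => t1 _.
  rewrite -sumrB; apply: eq_bigr => t2 _; ring.
rewrite exchange_big; under eq_bigr do rewrite exchange_big.
rewrite pair_big /measT [X in _ <= X]big_mkcond /=.
apply: ler_sum => -[t1 t2] _ /=.
rewrite -mulr_suml -mulr_sumr in_setX in_setC.
have f0 : 0 <= \sum_(k in G) q k (t1, t2) by apply: sumr_ge0.
have f1 : \sum_(k in G) q k (t1, t2) <= 1.
  rewrite -(q1 (t1,t2)) [X in _ <= X](bigID (fun k => k \in G)) /= lerDl.
  by apply: sumr_ge0.
have l0 := hpos (t1, t2).
by case: (t1 \in E1); case: (t2 \in E2) => /=; nra.
Qed.
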